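(* Let $G$ be a connected graph of order $n\geq 2$ and let $g:V(G_1)\to V(G_2)$ be a constant function. Then $Dist(F_G)=Dist(G)$.
   Context: All graphs are finite, simple and undirected. A labeling $f:V(H)\to\{1,\dots,t\}$ is $t$-distinguishing if the only label-preserving automorphism of $H$ is the identity; $Dist(H)$ is the least such $t$. Functigraph: for disjoint copies $G_1,G_2$ of $G$ and a function $g:V(G_1)\to V(G_2)$, $F_G$ has vertex set $V(G_1)\cup V(G_2)$ and edge set $E(G_1)\cup E(G_2)\cup\{uv: u\in V(G_1),\ g(u)=v\}$. *)

(* Defs.v *)
From mathcomp Require Import all_boot all_fingroup.
Set Implicit Arguments. Unset Strict Implicit. Unset Printing Implicit Defensive.

Definition simple_graph (T : finType) (e : rel T) : Prop :=
  symmetric e /\ irreflexive e.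

Definition connected_graph (T : finType) (e : rel T) : Prop :=
  forall x y, connect e x y.

Definition is_aut (T : finType) (e : rel T) (s : {perm T}) : bool :=
  [forall x, [forall y, e (s x) (s y) == e x y]].

(* There is a t-distinguishing labeling (labels 'I_t ~ {1,...,t}). *)
Definition has_dist_labeling (T : finType) (e : rel T) (t : nat) : bool :=
  [exists f : {ffun T -> 'I_t},
     [forall s : {perm T},
        (is_aut e s && [forall x, f (s x) == f x]) ==> (s == 1%g)]].

Lemma has_dist_labeling_card (T : finType) (e : rel T) :
  has_dist_labeling e #|T|.
Proof.
apply/existsP; exists [ffun x => enum_rank x].
apply/forallP => s; apply/implyP => /andP [_ /forallP H].
apply/eqP/permP => x; rewrite perm1.
by move: (H x); rewrite !ffunE => /eqP /enum_rank_inj.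
Qed.

Lemma has_dist_labeling_ex (T : finType) (e : rel T) :
  exists t, has_dist_labeling e t.
Proof. by exists #|T|; apply: has_dist_labeling_card. Qed.

Definition Dist (T : finType) (e : rel T) : nat :=
  ex_minn (has_dist_labeling_ex e).

(* Functigraph F_G on V(G_1) + V(G_2) = T + T, with g : V(G_1) -> V(G_2). *)
Definition functigraph_rel (T : finType) (e : rel T) (g : T -> T) : rel (T + T) :=
  fun a b => match a, b with
             | inl x, inl y => e x y
             | inr x, inr y => e x y
             | inl u, inr v => g u == v
             | inr v, inl u => g u == v
             end.

(* Main.v *)
Require Import Defs.
From mathcomp Require Import all_boot all_fingroup.
Set Implicit Arguments. Unset Strict Implicit. Unset Printing Implicit Defensive.

Lemma connect_homo (T1 T2 : finType) (e1 : rel T1) (e2 : rel T2) (h : T1 -> T2) :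
  (forall a b, e1 a b -> e2 (h a) (h b)) ->
  forall x y, connect e1 x y -> connect e2 (h x) (h y).
Proof.
move=> H x y /connectP [p pth ->]; elim: p x pth => [|z p IH] x /=.
  by move=> _; apply: connect0.
by move=> /andP [exz pz]; apply: connect_trans (connect1 (H _ _ exz)) (IH _ pz).
Qed.

Lemma autE (T : finType) (r : rel T) (s : {perm T}) :
  is_aut r s -> forall x y, r (s x) (s y) = r x y.
Proof. by move=> A x y; apply/eqP; move/forallP: A => /(_ x)/forallP/(_ y). Qed.

Lemma aut_inv (T : finType) (r : rel T) (s : {perm T}) :
  is_aut r s -> is_aut r s^-1%g.
Proof.
move=> A; apply/forallP => x; apply/forallP => y.
by rewrite -{2}(permKV s x) -{2}(permKV s y) (autE A).
Qed.

Lemma deg_aut (T : finType) (r : rel T) (s : {perm T}) x :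
  is_aut r s -> #|[set y | r x y]| <= #|[set y | r (s x) y]|.
Proof.
move=> A; rewrite -(card_imset _ (@perm_inj _ s)); apply: subset_leq_card.
apply/subsetP => y /imsetP [z]; rewrite !inE => rxz ->.
by rewrite (autE A).
Qed.

Definition er (T : finType) (e : rel T) (g : T -> T) (c : T) : rel (T + T) :=
  fun a b => functigraph_rel e g a b && (a != inr c) && (b != inr c).

Lemma fix_c (T : finType) (e : rel T) (g : T -> T) (c : T) (s : {perm (T + T)}) :
  irreflexive e -> connected_graph e -> 2 <= #|T| -> (forall u, g u = c) ->
  is_aut (functigraph_rel e g) s -> s (inr c) = inr c.
Proof.
move=> irr conn n2 hc A.
have [z ecz] : exists z, e c z.
  have : 0 < #|[set~ c]| by rewrite cardsC1; case: #|T| n2 => [|[]].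
  case/card_gt0P => y; rewrite in_setC1 => yc.
  move: (conn c y) => /connectP [[|z p]] /=.
    by move=> _ yc'; rewrite yc' eqxx in yc.
  by move=> /andP [ecz _] _; exists z.
have lo : #|T|.+1 <= #|[set y | functigraph_rel e g (inr c) y]|.
  have sub : inr z |: [set inl w | w in T] \subset [set y | functigraph_rel e g (inr c) y].
    apply/subsetP => y; rewrite !inE => /orP [/eqP -> /= | /imsetP [w _ ->] /=].
      by [].
    by rewrite hc.
  apply: leq_trans (subset_leq_card sub).
  rewrite cardsU1 card_imset; last exact: inl_inj.
  rewrite cardT.
  have -> : inr z \notin [set inl w | w in T] by apply/imsetP => -[].
  by [].
have := leq_trans lo (deg_aut (inr c) A).
case E : (s (inr c)) => [u|v].
  have : #|[set y | functigraph_rel e g (inl u) y]| <= #|T|.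
    have sub : [set y | functigraph_rel e g (inl u) y] \subset inr c |: [set inl w | w in [set~ u]].
      apply/subsetP => -[w|w]; rewrite !inE /=.
        move=> euw; apply/imsetP; exists w => //.
        by rewrite in_setC1; apply: contraTneq euw => ->; rewrite irr.
      by rewrite hc => /eqP ->; rewrite eqxx.
    apply: leq_trans (subset_leq_card sub) _.
    rewrite cardsU1 card_imset; last exact: inl_inj.
    rewrite cardsC1; case: #|T| n2 => // k _ /=.
    by case: (_ \notin _).
  by move=> h1 h2; have := leq_trans h2 h1; rewrite ltnn.
case: (eqVneq v c) => [-> //|vc].
have : #|[set y | functigraph_rel e g (inr v) y]| <= #|T|.
  have sub : [set y | functigraph_rel e g (inr v) y] \subset [set inr w | w in [set~ v]].
    apply/subsetP => -[w|w]; rewrite !inE /=.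
      by rewrite hc => /eqP vc'; rewrite vc' eqxx in vc.
    move=> evw; apply/imsetP; exists w => //.
    by rewrite in_setC1; apply: contraTneq evw => ->; rewrite irr.
  apply: leq_trans (subset_leq_card sub) _.
  rewrite card_imset; last exact: inr_inj.
  by rewrite cardsC1; case: #|T| n2.
by move=> h1 h2; have := leq_trans h2 h1; rewrite ltnn.
Qed.

Lemma side_l (T : finType) (e : rel T) (g : T -> T) (c : T) (s : {perm (T + T)}) :
  irreflexive e -> connected_graph e -> 2 <= #|T| -> (forall u, g u = c) ->
  is_aut (functigraph_rel e g) s -> forall u, exists w, s (inl u) = inl w.
Proof.
move=> irr conn n2 hc A u.
have fc := fix_c irr conn n2 hc A.
case E : (s (inl u)) => [w|v]; first by exists w.
exfalso.
have vc : v != c.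
  by apply/eqP => vc; subst v; move: E; rewrite -fc => /perm_inj.
have pres : forall a b, er e g c a b -> er e g c (s a) (s b).
  have neq : forall x, (s x != inr c) = (x != inr c).
    by move=> x; rewrite -{1}fc (inj_eq (@perm_inj _ s)).
  by move=> a b; rewrite /er (autE A) !neq.
have c1 : [set inl w | w in T] \subset [set y | connect (er e g c) (inl u) y].
  apply/subsetP => y /imsetP [w _ ->]; rewrite inE.
  apply: (connect_homo (e1 := e) (h := inl)) => //.
  by move=> a b eab; rewrite /er /= eab.
have c2 : [set s y | y in [set y | connect (er e g c) (inl u) y]] \subset
          [set y | connect (er e g c) (inr v) y].
  apply/subsetP => y /imsetP [x]; rewrite !inE => cx ->.
  by rewrite -E; apply: connect_homo pres _ _ cx.
have c3 : [set y | connect (er e g c) (inr v) y] \subset [set inr w | w in [set~ c]].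
  apply/subsetP => y; rewrite inE => /connectP [p pth ->].
  have : @inr T T v \in [set @inr T T w | w in [set~ c]] by apply: imset_f; rewrite in_setC1.
  elim: p (inr v) pth => [|b p IH] a //= /andP [eab pth] Ha.
  apply: IH pth _.
  case/imsetP: Ha eab => w; rewrite in_setC1 => wc ->. case: b => [x|x]; rewrite /er /=.
    by rewrite hc => /andP [/andP [/eqP cw _] _]; rewrite cw eqxx in wc.
  move=> /andP [_ xc]; apply/imsetP; exists x => //.
  by rewrite in_setC1; apply: contra xc => /eqP ->.
have := subset_leq_card c1; rewrite card_imset; last exact: inl_inj.
have := subset_leq_card c2; rewrite card_imset; last exact: perm_inj.
have := subset_leq_card c3; rewrite card_imset; last exact: inr_inj.
rewrite cardsC1 cardT => h3 h2 h1.
have := leq_trans h1 (leq_trans h2 h3).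
by move: n2; rewrite cardT; case: (size (enum T)) => // k _; rewrite /= ltnn.
Qed.

Lemma dist_down (T : finType) (e : rel T) (g : T -> T) (c : T) t :
  (forall u, g u = c) ->
  has_dist_labeling (functigraph_rel e g) t -> has_dist_labeling e t.
Proof.
move=> hc /existsP [f /forallP Hf].
apply/existsP; exists [ffun u => f (inl u)].
apply/forallP => s; apply/implyP => /andP [As /forallP Ls].
pose sf (a : T + T) := match a with inl u => inl (s u) | inr v => inr v end.
have sinj : injective sf.
  move=> [x|x] [y|y] //= [].
  by move/perm_inj ->.
pose sg := perm sinj.
have := Hf sg.
have -> : is_aut (functigraph_rel e g) sg.
  apply/forallP => a; apply/forallP => b; rewrite !permE.
  case: a => [x|x]; case: b => [y|y] /=; rewrite ?hc ?eqxx //.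
  by rewrite (autE As).
have -> : [forall x, f (sg x) == f x].
  apply/forallP => -[u|v]; rewrite permE //=.
  by have := Ls u; rewrite !ffunE.
move=> /= /eqP sg1; apply/eqP/permP => u; rewrite perm1.
have := congr1 (fun p : {perm T + T} => p (inl u)) sg1.
by rewrite permE perm1 /= => -[].
Qed.

Lemma dist_up (T : finType) (e : rel T) (g : T -> T) (c : T) t :
  irreflexive e -> connected_graph e -> 2 <= #|T| -> (forall u, g u = c) ->
  has_dist_labeling e t -> has_dist_labeling (functigraph_rel e g) t.
Proof.
move=> irr conn n2 hc /existsP [f /forallP Hf].
apply/existsP; exists [ffun a => match a with inl u => f u | inr v => f v end].
apply/forallP => s; apply/implyP => /andP [As /forallP Ls].
have Ais := aut_inv As.
have Sl := side_l irr conn n2 hc As.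
have Sr : forall v, exists w, s (inr v) = inr w.
  move=> v; case E : (s (inr v)) => [w|w]; last by exists w.
  have [w' E'] := side_l irr conn n2 hc Ais w.
  by move: E'; rewrite -E permK.
pose sl u := if s (inl u) is inl w then w else u.
pose sr u := if s (inr u) is inr w then w else u.
have hsl : forall u, s (inl u) = inl (sl u).
  by move=> u; rewrite /sl; case: (Sl u) => w ->.
have hsr : forall u, s (inr u) = inr (sr u).
  by move=> u; rewrite /sr; case: (Sr u) => w ->.
have slinj : injective sl.
  move=> x y sxy; have : s (inl x) = s (inl y) by rewrite !hsl sxy.
  by move/perm_inj => -[].
have srinj : injective sr.
  move=> x y sxy; have : s (inr x) = s (inr y) by rewrite !hsr sxy.
  by move/perm_inj => -[].
have l1 : forall u, sl u = u.
  have := Hf (perm slinj).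
  have -> : is_aut e (perm slinj).
    apply/forallP => x; apply/forallP => y; rewrite !permE.
    by have := autE As (inl x) (inl y); rewrite !hsl /= => ->.
  have -> : [forall x, f (perm slinj x) == f x].
    apply/forallP => x; rewrite permE.
    by have := Ls (inl x); rewrite hsl !ffunE.
  move=> /= /eqP P1 u.
  by have := congr1 (fun p : {perm T} => p u) P1; rewrite permE perm1.
have r1 : forall u, sr u = u.
  have := Hf (perm srinj).
  have -> : is_aut e (perm srinj).
    apply/forallP => x; apply/forallP => y; rewrite !permE.
    by have := autE As (inr x) (inr y); rewrite !hsr /= => ->.
  have -> : [forall x, f (perm srinj x) == f x].
    apply/forallP => x; rewrite permE.
    by have := Ls (inr x); rewrite hsr !ffunE.
  move=> /= /eqP P1 u.
  by have := congr1 (fun p : {perm T} => p u) P1; rewrite permE perm1.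
apply/eqP/permP => -[u|u]; rewrite perm1.
  by rewrite hsl l1.
by rewrite hsr r1.
Qed.

Theorem lemma2p3 (T : finType) (e : rel T) (g : T -> T) :
  simple_graph e -> connected_graph e -> 2 <= #|T| ->
  (exists c : T, forall u, g u = c) ->
  Dist (functigraph_rel e g) = Dist e.
Proof.
move=> [_ irr] conn n2 [c hc].
rewrite /Dist; apply: eq_ex_minn => t; apply/idP/idP.
  exact: dist_down hc.
exact: dist_up irr conn n2 hc.
Qed.
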